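(* Let $n,k$ be positive integers. There exists a $k$--$\mathrm{MOFR}(2,2n;2)$ if and only if there exists an orthogonal array $\mathrm{OA}(2n,k,2,2)$.
   Context: A frequency rectangle of type $\mathrm{FR}(m,n;q)$ is an $m\times n$ array on a symbol set of size $q$ in which each symbol appears exactly $n/q$ times in each row and $m/q$ times in each column. Two frequency rectangles of the same type are orthogonal if upon superimposition each of the $q^2$ ordered pairs of symbols appears the same number of times. A $k$--$\mathrm{MOFR}(m,n;q)$ is a set of $k$ pairwise orthogonal frequency rectangles of type $\mathrm{FR}(m,n;q)$. An orthogonal array $\mathrm{OA}(N,k,q,t)$ is an $N\times k$ array on a symbol set of size $q$ such that in every $N\times t$ subarray each ordered $t$-tuple of symbols appears as a row the same number of times. *)

(* Defs.v *)
From mathcomp Require Import all_boot all_algebra.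
Set Implicit Arguments.
Unset Strict Implicit.
Unset Printing Implicit Defensive.

Definition is_FR (m n q : nat) (A : 'M['I_q]_(m, n)) : Prop :=
  (forall (i : 'I_m) (s : 'I_q), #|[set j : 'I_n | A i j == s]| = n %/ q) /\
  (forall (j : 'I_n) (s : 'I_q), #|[set i : 'I_m | A i j == s]| = m %/ q).

Definition FR_orthogonal (m n q : nat) (A B : 'M['I_q]_(m, n)) : Prop :=
  exists lambda : nat, forall a b : 'I_q,
    #|[set c : 'I_m * 'I_n | (A c.1 c.2 == a) && (B c.1 c.2 == b)]| = lambda.

Definition is_MOFR (k m n q : nat) (F : 'I_k -> 'M['I_q]_(m, n)) : Prop :=
  (forall l, is_FR (F l)) /\
  (forall l l', l != l' -> FR_orthogonal (F l) (F l')).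

Definition exists_MOFR (k m n q : nat) : Prop :=
  exists F : 'I_k -> 'M['I_q]_(m, n), is_MOFR F.

Definition is_OA (N k q t : nat) (A : 'M['I_q]_(N, k)) : Prop :=
  forall c : 'I_t -> 'I_k,
    (forall u v : 'I_t, u < v -> c u < c v) ->
    exists lambda : nat, forall tup : 'I_t -> 'I_q,
      #|[set r : 'I_N | [forall u : 'I_t, A r (c u) == tup u]]| = lambda.

Definition exists_OA (N k q t : nat) : Prop :=
  exists A : 'M['I_q]_(N, k), is_OA t A.

(* Main.v *)
Require Import Defs.
From mathcomp Require Import all_boot all_algebra zify.
Set Implicit Arguments. Unset Strict Implicit. Unset Printing Implicit Defensive.

Lemma cardS (T : finType) (P : pred T) : #|[set x | P x]| = \sum_x (P x : nat).
Proof. by rewrite -sum1dep_card big_mkcond /=; apply: eq_bigr => x _; case: (P x). Qed.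

Lemma card_split (T : finType) (P Q1 Q2 : pred T) :
  (forall x, P x = Q1 x || Q2 x) -> (forall x, ~~ (Q1 x && Q2 x)) ->
  #|[set x | P x]| = #|[set x | Q1 x]| + #|[set x | Q2 x]|.
Proof.
move=> HP HQ; rewrite !cardS -big_split /=; apply: eq_bigr => x _.
by rewrite HP; move: (HQ x); case: (Q1 x); case: (Q2 x).
Qed.

Lemma card_ext (T : finType) (P Q : pred T) : (forall x, P x = Q x) ->
  #|[set x | P x]| = #|[set x | Q x]|.
Proof. by move=> H; apply: eq_card => x; rewrite !inE H. Qed.

Definition o0 : 'I_2 := ord0.
Definition o1 : 'I_2 := ord_max.
Definition neg (a : 'I_2) : 'I_2 := if a == o0 then o1 else o0.

Lemma I2 (x : 'I_2) : x = o0 \/ x = o1.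
Proof. case: x => [[|[|//]] H]; [left|right]; exact: val_inj. Qed.

Lemma sum2 (f : 'I_2 -> nat) : \sum_i f i = f o0 + f o1.
Proof.
rewrite big_ord_recr big_ord1 /=; congr (f _ + f _); exact: val_inj.
Qed.

Lemma card_pair2 m (P : 'I_2 -> 'I_m -> bool) :
  #|[set c : 'I_2 * 'I_m | P c.1 c.2]| = #|[set j | P o0 j]| + #|[set j | P o1 j]|.
Proof.
rewrite !cardS -(pair_bigA _ (fun i j => (P i j : nat))) /=.
by rewrite sum2.
Qed.

Lemma forall2 (P : 'I_2 -> bool) : [forall u, P u] = P o0 && P o1.
Proof.
apply/forallP/andP => [H|[H0 H1] u]; first by split.
by case: (I2 u) => ->.
Qed.

Lemma sum_lt m n : n <= m -> #|[set i : 'I_m | i < n]| = n.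
Proof.
move=> H; rewrite cardS -(big_mkord xpredT (fun i => (i < n : nat))).
rewrite (@big_cat_nat _ _ _ n 0 m _ _ (leq0n n) H) /=.
rewrite (eq_big_nat _ _ (F2 := fun _ => 1)); last by move=> i /andP[_ ->].
rewrite [X in _ + X](eq_big_nat _ _ (F2 := fun _ => 0)); last first.
  by move=> i /andP[Hi _]; rewrite ltnNge Hi.
by rewrite !sum_nat_const_nat; lia.
Qed.

Lemma neq_I2 (x y a : 'I_2) : x != y -> (y == a) = (x == neg a).
Proof.
by case: (I2 x) => ->; case: (I2 y) => ->; case: (I2 a) => ->.
Qed.

Lemma neg_eq (x s : 'I_2) : (neg x == s) = (x == neg s).
Proof. by case: (I2 x) => ->; case: (I2 s) => ->. Qed.

Lemma negK (x : 'I_2) : neg (neg x) = x.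
Proof. by case: (I2 x) => ->. Qed.

Definition N m (x y : 'I_m -> 'I_2) (a b : 'I_2) :=
  #|[set j | (x j == a) && (y j == b)]|.

Lemma split_x m (x y : 'I_m -> 'I_2) a :
  #|[set j | x j == a]| = N x y a o0 + N x y a o1.
Proof.
by apply: card_split => j; case: (I2 (y j)) => ->; case: (x j == a).
Qed.

Lemma split_y m (x y : 'I_m -> 'I_2) b :
  #|[set j | y j == b]| = N x y o0 b + N x y o1 b.
Proof.
by apply: card_split => j; case: (I2 (x j)) => ->; case: (y j == b).
Qed.

Lemma total m (x : 'I_m -> 'I_2) :
  #|[set j | x j == o0]| + #|[set j | x j == o1]| = m.
Proof.
rewrite -(card_split (P := predT)) ?cardsT ?card_ord //.
  by move=> j; case: (I2 (x j)) => ->.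
by move=> j; case: (I2 (x j)) => ->.
Qed.

Lemma mofr_oa n k : exists_MOFR k 2 (2 * n) 2 -> exists_OA (2 * n) k 2 2.
Proof.
case=> F [HFR Hor].
have flip l j : F l o1 j != F l o0 j.
  case: (HFR l) => _ /(_ j (F l o0 j)).
  rewrite cardS sum2 eqxx.
  by case: (F l o1 j == F l o0 j).
have bal l s : #|[set j | F l o0 j == s]| = n.
  by case: (HFR l) => /(_ o0 s) -> _; rewrite mulKn.
exists (\matrix_(r, l) F l o0 r)%R => c Hc.
set l := c o0; set l' := c o1.
have ll' : l != l' by rewrite neq_ltn Hc.
have [lam Hlam] := Hor l l' ll'.
set x := fun j => F l o0 j; set y := fun j => F l' o0 j.
have orth a b : N x y a b + N x y (neg a) (neg b) = lam.
  rewrite -(Hlam a b) (card_pair2 (fun i j => (F l i j == a) && (F l' i j == b))); congr (_ + _).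
  by apply: eq_card => j; rewrite !inE /x /y (neq_I2 _ (flip l j)) (neq_I2 _ (flip l' j)) !negK.
have bx a : N x y a o0 + N x y a o1 = n by rewrite -split_x bal.
have bY b : N x y o0 b + N x y o1 b = n by rewrite -split_y bal.
have e1 := orth o0 o0; have e2 := orth o0 o1.
have b0 := bx o0; have b1 := bx o1; have b2 := bY o0; have b3 := bY o1.
rewrite /neg /= in e1 e2.
exists (N x y o0 o0) => tup.
have -> : #|[set r | [forall u, (\matrix_(r, l) F l o0 r)%R r (c u) == tup u]]|
   = N x y (tup o0) (tup o1).
  by apply: card_ext => r; rewrite forall2 !mxE.
by case: (I2 (tup o0)) => ->; case: (I2 (tup o1)) => ->; lia.
Qed.

Lemma build_mofr n k (A : 'M['I_2]_(2 * n, k)) :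
  (forall l s, #|[set r | A r l == s]| = n) ->
  (forall l l', l != l' -> forall a b,
      N (fun r => A r l) (fun r => A r l') a b = N (fun r => A r l) (fun r => A r l') o0 o0) ->
  exists_MOFR k 2 (2 * n) 2.
Proof.
move=> Hbal Heq.
exists (fun l => \matrix_(i, j) (if i == o0 then A j l else neg (A j l)))%R; split.
  move=> l; split.
    move=> i s; rewrite mulKn //; case: (I2 i) => ->.
      by apply: (etrans _ (Hbal l s)); apply: eq_card => j; rewrite !inE mxE.
    by apply: (etrans _ (Hbal l (neg s))); apply: eq_card => j; rewrite !inE mxE /= neg_eq.
  move=> j s; rewrite cardS sum2 !mxE /=.
  by case: (I2 (A j l)) => ->; case: (I2 s) => ->.
move=> l l' Hll'; exists n => a b.
rewrite (card_pair2 (fun i j => ((\matrix_(i, j) (if i == o0 then A j l else neg (A j l)))%R i j == a) &&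
   ((\matrix_(i, j) (if i == o0 then A j l' else neg (A j l')))%R i j == b))).
set x := fun r => A r l; set y := fun r => A r l'.
have -> : #|[set j | ((\matrix_(i, j) (if i == o0 then A j l else neg (A j l)))%R o0 j == a) &&
   ((\matrix_(i, j) (if i == o0 then A j l' else neg (A j l')))%R o0 j == b)]| = N x y a b.
  by apply: eq_card => j; rewrite !inE !mxE.
have -> : #|[set j | ((\matrix_(i, j) (if i == o0 then A j l else neg (A j l)))%R o1 j == a) &&
   ((\matrix_(i, j) (if i == o0 then A j l' else neg (A j l')))%R o1 j == b)]| = N x y (neg a) (neg b).
  by apply: eq_card => j; rewrite !inE !mxE /= !neg_eq.
have H := Heq l l' Hll'.
have b0 : N x y o0 o0 + N x y o0 o1 = n by rewrite -split_x Hbal.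
by rewrite (H a b) (H (neg a) (neg b)); apply: (etrans _ b0); rewrite (H o0 o1).
Qed.

Lemma oa_mofr n k : 0 < n -> 0 < k -> exists_OA (2 * n) k 2 2 -> exists_MOFR k 2 (2 * n) 2.
Proof.
move=> Hn Hk [A HA].
case: (ltnP 1 k) => Hk2; last first.
  apply: (@build_mofr n k (\matrix_(r, l) (if (r < n)%N then o0 else o1))%R).
    move=> l s.
    set x := fun r : 'I_(2 * n) => if (r < n)%N then o0 else o1.
    have S0 : #|[set r | x r == o0]| = n.
      apply: (etrans _ (@sum_lt (2 * n) n _)); last by rewrite leq_pmull.
      by apply: eq_card => r; rewrite !inE /x; case: (r < n)%N.
    have T := total x.
    have E : forall s', #|[set r | x r == s']| = n.
      move=> s'; case: (I2 s') => -> //; lia.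
    apply: (etrans _ (E s)); apply: eq_card => r; by rewrite !inE mxE.
  move=> l l' Hll'; exfalso; move: Hll'.
  by case: l => [[|?] ?]; case: l' => [[|?] ?] //; lia.
have pairs (l l' : 'I_k) : l < l' -> forall a b,
    N (fun r => A r l) (fun r => A r l') a b = N (fun r => A r l) (fun r => A r l') o0 o0.
  move=> Hl a b.
  pose c (u : 'I_2) := if u == o0 then l else l'.
  have Hc : forall u v : 'I_2, u < v -> c u < c v.
    by move=> u v; case: (I2 u) => ->; case: (I2 v) => ->.
  have [lam Hlam] := HA c Hc.
  have E a' b' : N (fun r => A r l) (fun r => A r l') a' b' = lam.
    rewrite -(Hlam (fun u => if u == o0 then a' else b')).
    by apply: eq_card => r; rewrite !inE forall2.
  by rewrite !E.
have pairs' (l l' : 'I_k) : l != l' -> forall a b,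
    N (fun r => A r l) (fun r => A r l') a b = N (fun r => A r l) (fun r => A r l') o0 o0.
  rewrite neq_ltn => /orP[H|H] a b; first exact: pairs.
  have sw a' b' : N (fun r => A r l) (fun r => A r l') a' b' = N (fun r => A r l') (fun r => A r l) b' a'.
    by apply: eq_card => r; rewrite !inE andbC.
  by rewrite !sw (pairs _ _ H).
apply: (build_mofr (A := A)) => // l s.
have [l' Hl'] : exists l' : 'I_k, l != l'.
  have [->|Hne] := eqVneq l (Ordinal Hk).
    by exists (Ordinal Hk2).
  by exists (Ordinal Hk).
set x := fun r => A r l; set y := fun r => A r l'.
have H := pairs' l l' Hl'.
have t := total x.
have e0 := split_x x y o0; have e1 := split_x x y o1.
rewrite /x in t e0 e1.
rewrite (H o0 o1) (H o0 o0) in e0; rewrite (H o1 o0) (H o1 o1) in e1.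
case: (I2 s) => ->; lia.
Qed.

Theorem mainTheorem3 (n k : nat) : 0 < n -> 0 < k ->
  (exists_MOFR k 2 (2 * n) 2 <-> exists_OA (2 * n) k 2 2).
Proof.
move=> Hn Hk; split; [exact: mofr_oa | exact: oa_mofr].
Qed.
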